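(* For every graph $G$, $\operatorname{reg}(G)\le \Delta(G)\,\operatorname{im}(G)$, where $\Delta(G)$ is the maximum degree.
   Context: $\operatorname{reg}(G)=\max\{j\ge0:\widetilde H_{j-1}(\operatorname{Ind}(G[S]);\Bbbk)\neq0\text{ for some }S\subseteq V(G)\}$ over a field $\Bbbk$ ($\operatorname{Ind}$ = independence complex). $\operatorname{im}(G)$ is the induced matching number. *)

(* Defs.v *)
From HB Require Import structures.
From mathcomp Require Import all_boot all_order all_algebra.
Set Implicit Arguments. Unset Strict Implicit. Unset Printing Implicit Defensive.
Import GRing.Theory.
Local Open Scope ring_scope.

Definition simple_graph (T : finType) (e : rel T) : Prop :=
  symmetric e /\ irreflexive e.

Section Graphs.
Variables (T : finType) (e : rel T).

Definition independent (sigma : {set T}) : bool :=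
  [forall u in sigma, forall v in sigma, ~~ e u v].

(* faces of Ind(G[S]) : independent subsets of S (the empty set included) *)
Definition ind_face (S sigma : {set T}) : bool :=
  (sigma \subset S) && independent sigma.

Definition max_degree : nat := (\max_(v : T) #|[set u | e v u]|)%N.

Definition induced_matching (M : {set {set T}}) : bool :=
  [forall m in M, exists u, exists v, (u != v) && e u v && (m == [set u; v])] &&
  [forall m1 in M, forall m2 in M, (m1 != m2) ==>
     [forall u in m1, forall v in m2, (u != v) && ~~ e u v]].

Definition induced_matching_number : nat :=
  (\max_(M : {set {set T}} | induced_matching M) #|M|)%N.

Variable F : fieldType.

Local Notation N := #|{set T}|.

(* Boundary map d_j of the augmented (reduced) simplicial chain complex of
   Ind(G[S]) over F, sending chains on j-element faces (dimension j-1) to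
   chains on (j-1)-element faces.  All chain groups are embedded in F^{{set T}}
   (row vectors indexed by subsets of T, mathcomp's row-vector convention
   u *m d). *)
Definition boundary (S : {set T}) (j : nat) : 'M[F]_N :=
  \matrix_(i < N, k < N)
    let sigma := enum_val i in let tau := enum_val k in
    if ind_face S sigma && (#|sigma| == j)%N then
      \sum_(v in sigma | tau == sigma :\ v)
        (-1) ^+ #|[set u in sigma | (enum_rank u < enum_rank v)%N]|
    else 0.

Definition chains (S : {set T}) (j : nat) : 'M[F]_N :=
  \matrix_(i < N, k < N)
    if (i == k) && ind_face S (enum_val i) && (#|enum_val i| == j)%N then 1 else 0.

(* reduced homology \tilde H_{j-1}(Ind(G[S]); F) is nonzero:
   the cycles Z = C_j ∩ ker d_j are not contained in the boundaries B = im d_{j+1} *)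
Definition red_homology_nonzero (S : {set T}) (j : nat) : bool :=
  ~~ ((chains S j :&: kermx (boundary S j)) <= boundary S j.+1)%MS.

(* reg(G) = max { j >= 0 : \tilde H_{j-1}(Ind(G[S]); F) <> 0 for some S }.
   Faces have at most #|T| elements, so j ranges over j <= #|T| + 1
   (chain groups vanish beyond). *)
Definition reg : nat :=
  (\max_(j < #|T|.+2 | [exists S : {set T}, red_homology_nonzero S j]) j)%N.

End Graphs.

(* Main.v *)
Require Import Defs.
From HB Require Import structures.
From mathcomp Require Import all_boot all_order all_algebra.
From mathcomp Require Import ring.
From Stdlib Require Import Classical.
Set Implicit Arguments. Unset Strict Implicit. Unset Printing Implicit Defensive.
Import GRing.Theory.

Section Hom.
Variables (T : finType) (e : rel T) (F : fieldType).
Hypothesis esym : symmetric e.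
Hypothesis eirr : irreflexive e.

Local Open Scope ring_scope.
Implicit Types (S U C A B r s t : {set T}) (j k : nat) (x u v : T).

Definition sg (v : T) (s : {set T}) : F :=
  (-1) ^+ #|[set u in s | (enum_rank u < enum_rank v)%N]|.

Definition dd (f : {set T} -> F) (t : {set T}) : F :=
  \sum_(v | v \notin t) f (v |: t) * sg v (v |: t).

Definition res (S : {set T}) (j : nat) (f : {set T} -> F) (s : {set T}) : F :=
  if ind_face e S s && (#|s| == j)%N then f s else 0.

Definition cyc S j (z : {set T} -> F) :=
  (forall s, res S j z s = z s) /\ (forall t, dd z t = 0).

Definition bnd S j (z : {set T} -> F) :=
  exists c, forall t, z t = dd (res S j.+1 c) t.

Definition hnz S j := exists z, cyc S j z /\ ~ bnd S j z.

Lemma sg2 v s : sg v s * sg v s = 1.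
Proof. by rewrite -expr2 sqrr_sign. Qed.

Lemma card_predU1 (P : pred T) x (s : {set T}) : x \notin s ->
  #|[set u in x |: s | P u]| = (P x + #|[set u in s | P u]|)%N.
Proof.
move=> xs; case h: (P x).
  have -> : [set u in x |: s | P u] = x |: [set u in s | P u].
    apply/setP=> u; rewrite !inE.
    by case: (eqVneq u x) => [->|]; rewrite ?h.
  by rewrite cardsU1 inE (negbTE xs).
have -> : [set u in x |: s | P u] = [set u in s | P u].
  apply/setP=> u; rewrite !inE.
  by case: (eqVneq u x) => [->|]; rewrite ?h ?andbF.
by [].
Qed.

Lemma sgU1 v x (s : {set T}) : x \notin s ->
  sg v (x |: s) = (-1) ^+ (enum_rank x < enum_rank v)%N * sg v s.
Proof.
move=> xs; rewrite /sg -exprD.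
by rewrite (card_predU1 (fun u => (enum_rank u < enum_rank v)%N) xs).
Qed.

Lemma sgN (v x : T) : v != x ->
  (-1) ^+ (enum_rank x < enum_rank v)%N = - (-1) ^+ (enum_rank v < enum_rank x)%N :> F.
Proof.
move=> vx; case: (ltngtP (enum_rank x) (enum_rank v)) => h.
- by rewrite expr1 expr0.
- by rewrite expr1 expr0 opprK.
- by move/val_inj/enum_rank_inj: h => h; rewrite h eqxx in vx.
Qed.

Definition eps x (r : {set T}) := sg x (x |: r).

Lemma sg_self x (r : {set T}) : sg x (x |: r) = sg x r.
Proof.
rewrite /sg; congr (_ ^+ _); apply: eq_card => u; rewrite !inE.
by case: (eqVneq u x) => [->|]; rewrite ?ltnn ?andbF.
Qed.

Lemma K1 x v (r : {set T}) : v != x -> x \notin r -> v \notin r ->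
  eps x (v |: r) * sg v (v |: r) = - (eps x r * sg v (v |: (x |: r))).
Proof.
move=> vx xr vr; rewrite /eps !sg_self.
rewrite (sgU1 _ vr) (sgU1 _ xr) (sgN vx) mulNr mulrN opprK.
by rewrite mulrCA !mulrA.
Qed.

Lemma K2 x v (r : {set T}) : v != x -> x \notin r -> v \notin r ->
  eps x (v |: r) * sg v (v |: (x |: r)) = - (eps x r * sg v (v |: r)).
Proof.
move=> vx xr vr; rewrite /eps !sg_self.
rewrite (sgU1 _ vr) (sgU1 _ xr) (sgN vx) mulNr mulrN; congr (- _).
by rewrite mulrACA -expr2 sqrr_sign mul1r.
Qed.

Lemma sum_notinU1 x (r : {set T}) (G : T -> F) :
  \sum_(v | v \notin x |: r) G v = \sum_(v | (v \notin r) && (v != x)) G v.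
Proof. by apply: eq_bigl => v; rewrite in_setU1 negb_or andbC. Qed.

Lemma dd_split x (t : {set T}) f : x \notin t ->
  dd f t = f (x |: t) * eps x t +
           \sum_(v | (v \notin t) && (v != x)) f (v |: t) * sg v (v |: t).
Proof. by move=> xt; rewrite /dd (bigD1 x) //. Qed.

Lemma dd_zero f (t : {set T}) : (forall v, v \notin t -> f (v |: t) = 0) -> dd f t = 0.
Proof. by move=> h; rewrite /dd big1 // => v /h ->; rewrite mul0r. Qed.

Lemma ddD f g t : dd (fun s => f s + g s) t = dd f t + dd g t.
Proof. by rewrite /dd -big_split /=; apply: eq_bigr => v _; rewrite mulrDl. Qed.

Lemma res0 S j f s : f s = 0 -> res S j f s = 0.
Proof. by rewrite /res => ->; case: ifP. Qed.

Lemma supp S j z s : (forall s, res S j z s = z s) ->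
  ~~ (ind_face e S s && (#|s| == j)%N) -> z s = 0.
Proof. by move=> h hs; rewrite -h /res (negbTE hs). Qed.

Lemma suppP S j z s : (forall s, res S j z s = z s) -> z s != 0 ->
  ind_face e S s /\ #|s| = j.
Proof.
move=> h nz; case c: (ind_face e S s && (#|s| == j)%N).
  by case/andP: c => -> /eqP.
by rewrite (supp h) ?c ?eqxx in nz.
Qed.

Lemma independentP (s : {set T}) :
  reflect (forall u v, u \in s -> v \in s -> ~~ e u v) (independent e s).
Proof.
apply: (iffP forall_inP) => [h u v us vs|h u us].
  by move/forall_inP: (h u us); apply.
by apply/forall_inP => v vs; apply: h.
Qed.

Lemma face_sub A B s : A \subset B -> ind_face e A s -> ind_face e B s.
Proof. rewrite /ind_face => AB /andP[sA ->]; by rewrite (subset_trans sA AB). Qed.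

Definition nb x := [set u | (u == x) || e x u].

Lemma face_D1 S x s : ind_face e S s -> x \notin s -> ind_face e (S :\ x) s.
Proof.
rewrite /ind_face.
rewrite /ind_face.
move=> /andP[sS ->] xs; rewrite andbT; apply/subsetP=> u us.
by rewrite !inE (subsetP sS) // andbT; apply: contraNneq xs => <-.
Qed.

Lemma face_U1 S x r : x \in S -> ind_face e (S :\: nb x) r -> ind_face e S (x |: r).
Proof.
rewrite /ind_face.
move=> xS /andP[rS /independentP ir]; apply/andP; split.
  apply/subsetP=> u; rewrite in_setU1 => /orP[/eqP->//|ur].
  by move: (subsetP rS u ur); rewrite inE => /andP[].
have rN u : u \in r -> (u != x) && ~~ e x u.
  by move=> ur; move: (subsetP rS u ur); rewrite !inE negb_or => /andP[].
apply/independentP => u v; rewrite !in_setU1.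
case/orP=> [/eqP->|ur]; case/orP=> [/eqP->|vr].
- by rewrite eirr.
- by case/andP: (rN v vr).
- by rewrite esym; case/andP: (rN u ur).
- by apply: ir.
Qed.

Lemma face_U1' S x r : x \in S -> ind_face e S r -> (forall u, u \in S -> ~~ e x u) ->
  ind_face e S (x |: r).
Proof.
rewrite /ind_face.
move=> xS /andP[rS /independentP ir] iso; apply/andP; split.
  by apply/subsetP=> u; rewrite in_setU1 => /orP[/eqP->//|ur]; apply: (subsetP rS).
apply/independentP => u v; rewrite !in_setU1.
case/orP=> [/eqP->|ur]; case/orP=> [/eqP->|vr].
- by apply: iso.
- by apply: iso; apply: (subsetP rS).
- by rewrite esym; apply: iso; apply: (subsetP rS).
- by apply: ir.
Qed.

Lemma face_nb S x r : ind_face e S (x |: r) -> x \notin r -> ind_face e (S :\: nb x) r.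
Proof.
rewrite /ind_face.
move=> /andP[rS /independentP ir] xr; apply/andP; split.
  apply/subsetP=> u ur; rewrite !inE negb_or.
  rewrite (subsetP rS) ?in_setU1 ?ur ?orbT // andbT.
  rewrite (ir x u) ?setU11 ?in_setU1 ?ur ?orbT // andbT.
  by apply: contraNneq xr => <-.
apply/independentP => u v ur vr; apply: ir; rewrite in_setU1 ?ur ?vr orbT //.
Qed.

Lemma eps2 x r : eps x r * eps x r = 1.
Proof. exact: sg2. Qed.

Definition cone x (g : {set T} -> F) s := if x \in s then eps x (s :\ x) * g (s :\ x) else 0.

Lemma dd_cone_out x g t : x \notin t -> dd (cone x g) t = g t.
Proof.
move=> xt; rewrite (dd_split _ xt) big1 ?addr0.
  by rewrite /cone setU11 setU1K // mulrC mulrA eps2 mul1r.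
move=> v /andP[vt vx]; rewrite /cone in_setU1 eq_sym (negbTE vx) (negbTE xt) /=.
by rewrite mul0r.
Qed.

Lemma dd_cone_in x g r : x \notin r ->
  dd (cone x g) (x |: r) = - eps x r * (dd g r - g (x |: r) * eps x r).
Proof.
move=> xr; rewrite (dd_split _ xr) addrC addKr /dd sum_notinU1 mulr_sumr.
apply: eq_bigr => v /andP[vr vx].
have xv : x \in v |: (x |: r) by rewrite !in_setU1 eqxx orbT.
rewrite /cone xv.
have -> : (v |: (x |: r)) :\ x = v |: r.
  by rewrite setUCA setU1K // in_setU1 eq_sym (negbTE vx).
by rewrite -mulrA [g _ * _]mulrC mulrA K2 //; ring.
Qed.

Lemma cone_res S j x g : x \in S ->
  (forall r, x \notin r -> g r != 0 -> ind_face e S (x |: r) /\ #|r| = j) ->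
  forall s, res S j.+1 (cone x g) s = cone x g s.
Proof.
move=> xS h s; rewrite /res /cone; case xs: (x \in s); last by case: ifP.
have xr : x \notin s :\ x by rewrite setD11.
case: (eqVneq (g (s :\ x)) 0) => [->|nz]; first by rewrite mulr0; case: ifP.
case: (h _ xr nz); rewrite setD1K // => -> hc.
by rewrite -(setD1K xs) cardsU1 xr hc eqxx.
Qed.


Lemma dd_res S j f t : (forall s, res S j f s = f s) -> dd (res S j f) t = dd f t.
Proof. by move=> h; rewrite /dd; apply: eq_bigr => v _; rewrite h. Qed.

Lemma lemA U j x : x \in U -> (forall u, u \in U -> ~~ e x u) -> ~ hnz U j.
Proof.
move=> xU iso [z [[zres zc] nbd]]; apply: nbd.
exists (cone x z) => t.
have cr : forall s, res U j.+1 (cone x z) s = cone x z s.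
  apply: cone_res => // r xr nz; case: (suppP zres nz) => fr cr.
  by split; [apply: face_U1'|].
rewrite (dd_res _ cr).
case xt: (x \in t); last by rewrite dd_cone_out ?xt.
have xr : x \notin t :\ x by rewrite setD11.
rewrite -(setD1K xt) dd_cone_in // zc sub0r mulNr mulrN opprK.
by rewrite mulrCA eps2 mulr1.
Qed.

Definition ww x z r := if x \in r then 0 else - eps x r * z (x |: r).

Lemma lemB S j x : x \in S -> hnz S j ->
  hnz (S :\ x) j \/ (0 < j)%N /\ hnz (S :\: nb x) j.-1.
Proof.
move=> xS [z [[zres zc] nbd]].
set S1 := S :\ x; set S2 := S :\: nb x.
have xS2 : x \notin S2 by rewrite !inE eqxx.
have S12 : S2 \subset S1.
  by apply/subsetP=> u; rewrite !inE negb_or => /andP[/andP[-> _] ->].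
have S1S : S1 \subset S by apply: subsetDl.
have noface2 s : x \in s -> ~~ ind_face e S2 s.
  by move=> xs; apply: contra xS2 => /andP[/subsetP h _]; apply: h.
set w := ww x z.
case: (classic (exists c, forall r, w r = dd (res S2 j c) r)) => [[c wc]|nc].
-
  left; set c' := res S2 j c.
  have c'x s : x \in s -> c' s = 0.
    by move=> xs; rewrite /c' /res (negbTE (noface2 s xs)).
  have c'res s : res S j c' s = c' s.
    rewrite /c' /res; case h: (ind_face e S2 s && (#|s| == j)%N); last by case: ifP.
    by case/andP: h => /(face_sub (subset_trans S12 S1S)) -> ->.
  set z' := fun s => if x \in s then 0 else z s - c' s.
  exists z'; split; first split.
  + move=> s; rewrite /z' /res; case xs: (x \in s) => //; first by case: ifP.
    case h: (ind_face e S1 s && (#|s| == j)%N) => //.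
    have hz : z s = 0.
      apply: (supp zres); apply: contraFN h => /andP[fs ->].
      by rewrite andbT face_D1 ?xs.
    have hc : c' s = 0.
      rewrite /c' /res; case h2: (ind_face e S2 s && (#|s| == j)%N) => //.
      by case/andP: h2 => /(face_sub S12) f2 /eqP hj; rewrite f2 hj eqxx in h.
    by rewrite hz hc subrr.
  + move=> r; case xr: (x \in r).
      apply: dd_zero => v _; rewrite /z' in_setU1 xr orbT //.
    rewrite (dd_split _ (negbT xr)) /z' setU11 mul0r add0r.
    have e1 := zc r; rewrite (dd_split _ (negbT xr)) in e1.
    have e2 := wc r.
    rewrite (dd_split _ (negbT xr)) -/c' c'x ?setU11 // mul0r add0r in e2.
    rewrite /w /ww xr in e2.
    rewrite (eq_bigr (fun v => z (v |: r) * sg v (v |: r) - c' (v |: r) * sg v (v |: r))).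
      rewrite sumrB -e2.
      set Sz := (X in X - _ = 0).
      have -> : Sz = - (z (x |: r) * eps x r) by apply/eqP; rewrite -addr_eq0 addrC e1.
      ring.
    move=> v /andP[vr vx]; rewrite in_setU1 eq_sym (negbTE vx) xr /=.
    by rewrite mulrBl.
  + move=> [b zb]; apply: nbd.
    exists (fun s => res S1 j.+1 b s + cone x c' s) => t.
    have r1 s : res S j.+1 (res S1 j.+1 b) s = res S1 j.+1 b s.
      rewrite /res; case h: (ind_face e S1 s && (#|s| == j.+1)%N); last by case: ifP.
      by case/andP: h => /(face_sub S1S) -> ->.
    have r2 : forall s, res S j.+1 (cone x c') s = cone x c' s.
      apply: cone_res => // r xr nz.
      have nz' : c' r != 0 by [].
      move: nz'; rewrite /c' /res; case: ifP => [/andP[f2 /eqP hj] _|]; last by rewrite eqxx.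
      by split=> //; apply: face_U1.
    have radd s : res S j.+1 (fun q => res S1 j.+1 b q + cone x c' q) s =
                  res S1 j.+1 b s + cone x c' s.
      by rewrite -r1 -r2 /res; case: ifP => //; rewrite addr0.
    rewrite (dd_res _ radd) ddD -zb.
    case xt: (x \in t).
      have xr : x \notin t :\ x by rewrite setD11.
      rewrite /z' xt add0r -(setD1K xt) dd_cone_in // c'x ?setU11 // mul0r subr0.
      have := wc (t :\ x); rewrite -/c' => <-.
      by rewrite /w /ww (negbTE xr) mulrA mulrNN eps2 mul1r.
    by rewrite dd_cone_out ?xt // /z' xt subrK.
- right.
  have jpos : (0 < j)%N.
    rewrite lt0n; apply/negP => /eqP j0; apply: nc; exists (fun _ => 0) => r.
    rewrite dd_zero; last by move=> v _; rewrite /res; case: ifP.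
    rewrite /w /ww; case: ifP => // xr.
    rewrite (supp zres) ?mulr0 //; apply/negP => /andP[_ /eqP].
    by rewrite j0 cardsU1 xr.
  split=> //; exists w; split; first split.
  + move=> r; rewrite /res.
    case h: (ind_face e S2 r && (#|r| == j.-1)%N) => //.
    rewrite /w /ww; case: ifP => // xr.
    rewrite (supp zres) ?mulr0 //; apply: contraFN h => /andP[f /eqP hj].
    rewrite face_nb ?xr //=; rewrite cardsU1 xr in hj.
    by rewrite -hj.
  + move=> r; case xr: (x \in r).
      by apply: dd_zero => v _; rewrite /w /ww in_setU1 xr orbT.
    rewrite (dd_split _ (negbT xr)) /w /ww setU11 mul0r add0r.
    rewrite (eq_bigr (fun v => eps x r * (z (v |: (x |: r)) * sg v (v |: (x |: r))))).
      rewrite -mulr_sumr -sum_notinU1.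
      by have := zc (x |: r); rewrite /dd => ->; rewrite mulr0.
    move=> v /andP[vr vx]; rewrite in_setU1 eq_sym (negbTE vx) xr /= setUCA.
    by rewrite !mulNr mulrAC K1 ?xr //; ring.
  + move=> [c hc]; apply: nc; exists c => r; rewrite hc prednK //.
Qed.


Lemma dd_ext f g t : (forall s, f s = g s) -> dd f t = dd g t.
Proof. by move=> h; rewrite /dd; apply: eq_bigr => v _; rewrite h. Qed.

Lemma res_ext S j f g s : (forall s, f s = g s) -> res S j f s = res S j g s.
Proof. by move=> h; rewrite /res h. Qed.

Local Notation N := #|{set T}|.

Lemma bd_mat S j (u : 'rV[F]_N) (k : 'I_N) :
  (u *m boundary e F S j) 0 k = dd (res S j (fun s => u 0 (enum_rank s))) (enum_val k).
Proof.
rewrite mxE (reindex (@enum_rank _)) /=; last by apply: onW_bij; apply: enum_rank_bij.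
set t := enum_val k.
rewrite (eq_bigr (fun s => \sum_(v | (v \in s) && (t == s :\ v))
                    res S j (fun s => u 0 (enum_rank s)) s * sg v s)); last first.
  move=> s _; rewrite mxE enum_rankK /res -/t.
  case: ifP => _; first by rewrite mulr_sumr.
  by rewrite mulr0 big1 // => v _; rewrite mul0r.
rewrite (exchange_big_dep xpredT) //= /dd [RHS]big_mkcond; apply: eq_bigr => v _.
case vt: (v \in t) => /=.
  rewrite big_pred0 // => s; apply/negP => /andP[vs /eqP ts].
  by move: vt; rewrite ts setD11.
rewrite (big_pred1 (v |: t)) // => s /=; apply/andP/eqP => [[vs /eqP ->]|->].
  by rewrite setD1K.
by rewrite setU11 setU1K ?vt.
Qed.

Lemma red_hnz S j : red_homology_nonzero e F S j -> hnz S j.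
Proof.
move=> /row_subPn [i ni].
set u := row i _ in ni.
have uC : (u <= chains e F S j)%MS by apply: submx_trans (row_sub _ _) (capmxSl _ _).
have uK : (u <= kermx (boundary e F S j))%MS
  by apply: submx_trans (row_sub _ _) (capmxSr _ _).
pose z := fun s => u 0 (enum_rank s).
have zres : forall s, res S j z s = z s.
  move=> s; rewrite /res; case: ifP => // hc.
  case/submxP: uC => v uv; rewrite /z uv mxE big1 // => i' _; rewrite mxE.
  case: (eqVneq i' (enum_rank s)) => [->|ne]; first by rewrite enum_rankK /= hc mulr0.
  by rewrite /= mulr0.
exists z; split; first split => //.
  move=> t; move/sub_kermxP: uK => /rowP /(_ (enum_rank t)).
  by rewrite bd_mat mxE enum_rankK (dd_res _ zres).
move=> [c hc]; apply: (negP ni); apply/submxP; exists (\row_i c (enum_val i)).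
apply/rowP => k; rewrite bd_mat.
have -> : u 0 k = z (enum_val k) by rewrite /z enum_valK.
rewrite hc; apply: dd_ext => s; apply: res_ext => s'; rewrite mxE enum_rankK //.
Qed.


Definition im_in U := (\max_(M : {set {set T}} |
   induced_matching e M && [forall m in M, m \subset U]) #|M|)%N.

Lemma im_inT U : (im_in U <= induced_matching_number e)%N.
Proof.
apply/bigmax_leqP => M /andP[hM _].
exact: (@leq_bigmax_cond _ (fun M => induced_matching e M) (fun M => #|M|) M).
Qed.

Lemma im_in_step x y S U : x \in S -> y \in S -> e x y ->
  (forall u, u \in U -> [&& u \in S, u \notin nb x & u \notin nb y]) ->
  ((im_in U).+1 <= im_in S)%N.
Proof.
move=> xS yS xy hU.
have P0 : induced_matching e (set0 : {set {set T}}) && [forall m in (set0 : {set {set T}}), m \subset U].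
  by apply/andP; split; [apply/andP; split|]; apply/forall_inP => m; rewrite inE.
case: (@arg_maxnP _ set0
   (fun M : {set {set T}} => induced_matching e M && [forall m in M, m \subset U])
   (fun M => #|M|) P0) => M /andP[iM sM] Mmax.
have leU : (im_in U <= #|M|)%N by apply/bigmax_leqP => M' /Mmax.
have xU : x \notin U.
  by apply/negP => /hU /and3P[_ /negP[]]; rewrite inE eqxx.
have yU : y \notin U.
  by apply/negP => /hU /and3P[_ _ /negP[]]; rewrite inE eqxx.
have mU m : m \in M -> m \subset U by move=> mM; move/forall_inP: sM; apply.
have nxy : x != y by apply: contra_eqN xy => /eqP ->; rewrite eirr.
have xyM : [set x; y] \notin M.
  by apply/negP => /mU /subsetP /(_ x); rewrite !inE eqxx (negbTE xU) => /(_ isT).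
pose M' := [set x; y] |: M.
have cardM' : #|M'| = #|M|.+1 by rewrite cardsU1 xyM.
apply: (leq_trans _ (_ : #|M'| <= im_in S)%N); first by rewrite cardM' ltnS.
apply: (@leq_bigmax_cond _ (fun M => induced_matching e M && [forall m in M, m \subset S])
   (fun M => #|M|) M').
case/andP: iM => /forall_inP iM1 /forall_inP iM2.
have farU u : u \in U -> [&& u != x, u != y, ~~ e x u & ~~ e y u].
  move/hU => /and3P[_]; rewrite !inE !negb_or => /andP[-> ->] /andP[-> ->] //.
apply/andP; split; first (apply/andP; split).
- apply/forall_inP => m; rewrite in_setU1 => /orP[/eqP->|mM]; last exact: iM1.
  by apply/existsP; exists x; apply/existsP; exists y; rewrite nxy xy eqxx.
- apply/forall_inP => m1 m1M; apply/forall_inP => m2 m2M; apply/implyP => m12.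
  apply/forall_inP => u um1; apply/forall_inP => v vm2.
  move: m1M m2M; rewrite !in_setU1 => /orP[/eqP e1|m1M] /orP[/eqP e2|m2M].
  + by rewrite e1 e2 eqxx in m12.
  + move: um1; rewrite e1 !inE => /orP[]/eqP->;
    case/and4P: (farU v (subsetP (mU _ m2M) v vm2)) => vx vy exv eyv.
      by rewrite eq_sym vx exv.
    by rewrite eq_sym vy eyv.
  + move: vm2; rewrite e2 !inE => /orP[]/eqP->;
    case/and4P: (farU u (subsetP (mU _ m1M) u um1)) => ux uy exu eyu.
      by rewrite ux esym exu.
    by rewrite uy esym eyu.
  + by move/forall_inP: (iM2 _ m1M) => /(_ _ m2M) /implyP /(_ m12) /forall_inP /(_ _ um1)
       /forall_inP /(_ _ vm2).
- apply/forall_inP => m; rewrite in_setU1 => /orP[/eqP->|mM].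
    by apply/subsetP => u; rewrite !inE => /orP[]/eqP->.
  apply/subsetP => u /(subsetP (mU _ mM)) /hU /and3P[] //.
Qed.


Lemma iter S x : x \in S -> forall ys C j, all (fun y => e x y) ys -> C \subset S ->
  hnz C j -> (forall u, u \in C -> e x u -> u \in ys) ->
  (x \in C \/ exists y, [/\ y \in S, e x y, x \notin C & forall u, u \in C -> u \notin nb y]) ->
  exists U k, [/\ U \subset S, hnz U k, (j <= k + size ys)%N,
    (forall u, u \in U -> ~~ e x u) &
    (x \in U \/ exists y, [/\ y \in S, e x y, x \notin U & forall u, u \in U -> u \notin nb y])].
Proof.
move=> xS; elim=> [|y ys IH] C j /= hall CS hC hn hI.
  exists C, j; split=> //; first by rewrite addn0.
  by move=> u uC; apply/negP => /(hn _ uC).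
case/andP: hall => xy hall.
have nxy : x != y by apply: contra_eqN xy => /eqP ->; rewrite eirr.
case yC: (y \in C); last first.
  case: (IH C j hall CS hC _ hI) => [u uC xu|U [k [h1 h2 h3 h4 h5]]].
    move: (hn u uC xu); rewrite inE => /orP[/eqP uy|//].
    by rewrite -uy uC in yC.
  by exists U, k; split=> //; rewrite (leq_trans h3) // leq_add2l.
case: (lemB yC hC) => [h|[jpos h]].
- have CS' : C :\ y \subset S by apply: subset_trans (subsetDl _ _) CS.
  case: (IH _ j hall CS' h).
  + move=> u; rewrite !inE => /andP[uy uC] xu.
    by move: (hn u uC xu); rewrite inE (negbTE uy).
  + case: hI => [xC|[y' [h1 h2 h3 h4]]]; [left|right].
      by rewrite !inE nxy xC.
    exists y'; split=> //; first by apply: contra h3; apply: (subsetP (subsetDl _ _)).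
    by move=> u /(subsetP (subsetDl _ _)); apply: h4.
  + move=> U [k [h1 h2 h3 h4 h5]]; exists U, k; split=> //.
    by rewrite (leq_trans h3) // leq_add2l.
- have CS' : C :\: nb y \subset S by apply: subset_trans (subsetDl _ _) CS.
  case: (IH _ j.-1 hall CS' h).
  + move=> u; rewrite !inE negb_or => /andP[/andP[uy _] uC] xu.
    by move: (hn u uC xu); rewrite inE (negbTE uy).
  + right; exists y; split => //; first exact: (subsetP CS).
      by rewrite !inE negb_or esym xy /= andbF.
    by move=> u; rewrite inE => /andP[].
  + move=> U [k [h1 h2 h3 h4 h5]]; exists U, k; split=> //.
    by rewrite -(prednK jpos) addnS ltnS.
Qed.

Definition Delta := (\max_(v : T) #|[set u | e v u]|)%N.

Lemma hnz0 j : hnz set0 j -> j = 0%N.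
Proof.
case: j => // j [z [[zres zc] nbd]]; exfalso; apply: nbd.
exists (fun _ => 0) => t.
rewrite dd_zero; last by move=> v _; rewrite /res; case: ifP.
apply: (supp zres); apply/negP => /andP[/andP[ts _] /eqP tj].
by move: tj; rewrite (_ : t = set0) ?cards0 //; apply/eqP; rewrite -subset0.
Qed.

Lemma main_ind n : forall S j, (#|S| <= n)%N -> hnz S j -> (j <= Delta * im_in S)%N.
Proof.
elim: n => [|n IH] S j.
  by rewrite leqn0 cards_eq0 => /eqP -> /hnz0 ->.
move=> Sn hS; case: (set_0Vmem S) => [S0|[x xS]].
  by move: hS; rewrite S0 => /hnz0 ->.
pose ys := enum [set u in S | e x u].
have hall : all (fun y => e x y) ys.
  by apply/allP => u; rewrite mem_enum inE => /andP[].
have hn u : u \in S -> e x u -> u \in ys by move=> uS xu; rewrite mem_enum inE uS.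
case: (iter xS hall (subxx S) hS hn (or_introl xS)) => U [k [US hU hj hnx hcase]].
case: hcase => [xU|[y [yS xy xU hy]]].
  by exfalso; apply: (lemA xU hnx hU).
have ltU : (#|U| < #|S|)%N.
  apply: proper_card; rewrite properEneq US andbT.
  by apply: contraNneq xU => ->.
have IHU : (k <= Delta * im_in U)%N by apply: IH hU; rewrite -ltnS (leq_trans ltU Sn).
have hsz : (size ys <= Delta)%N.
  rewrite -cardE; apply: leq_trans (_ : #|[set u | e x u]| <= Delta)%N.
    by apply: subset_leq_card; apply/subsetP => u; rewrite !inE => /andP[].
  exact: (@leq_bigmax _ (fun v => #|[set u | e v u]|) x).
have step : ((im_in U).+1 <= im_in S)%N.
  apply: (im_in_step xS yS xy) => u uU; rewrite (subsetP US) //= hy // andbT.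
  rewrite inE negb_or hnx // andbT; apply: contraNneq xU => <- //.
apply: (leq_trans hj); apply: leq_trans (_ : Delta * (im_in U).+1 <= _)%N.
  by rewrite mulnS addnC leq_add // IHU.
by rewrite leq_mul2l step orbT.
Qed.

End Hom.

Theorem mainTheorem10 (F : fieldType) (T : finType) (e : rel T) :
  simple_graph e ->
  (reg e F <= max_degree e * induced_matching_number e)%N.
Proof.
move=> [esym eirr]; rewrite /reg; apply/bigmax_leqP => j /existsP [S hS].
have := main_ind esym eirr (leqnn #|S|) (red_hnz hS).
move/leq_trans; apply; apply: leq_mul => //; exact: im_inT.
Qed.
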